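(* Let $f\in U^N_{\rm per}(\epsilon\mathbb Z)$ with $\langle f\rangle_X=0$, assume $0<c_\psi\le\psi\le C_\psi$ and $N/p\in\mathbb N$, and let $u$, $u^0$, $\chi$ be the solutions of the atomistic problem, the homogenized problem and the cell problem. Then the corrector $u^{\rm c}$ belongs to $U^N_{\rm per}(\epsilon\mathbb Z)$ and, with the two-scale function $w(X_i,Y_j)=\chi(X_i,Y_j)Du^0(X_i)$, \[ |\langle u^{\rm c}\rangle_X|\le\epsilon^2\frac p2\|D_Xw\|_{L^1(N,p)},\qquad |u^{\rm c}-u|_{H^1}\le\epsilon\frac{C_\psi}{c_\psi}\|D_XT_Yw\|_{L^2(N)}. \]
   Context: Let $\epsilon>0$ and $N,p$ positive integers; $X_i=\epsilon i$, $Y_j=j$. $U^N_{\rm per}(\epsilon\mathbb Z)$: functions $u:\epsilon\mathbb Z\to\mathbb R$ with $u(X_{i+N})=u(X_i)$; $U^N_\#(\epsilon\mathbb Z)$: those with $\langle u\rangle_X:=\frac1N\sum_{i=1}^Nu(X_i)=0$. $\langle u,v\rangle_X=\frac1N\sum_{i=1}^Nu(X_i)v(X_i)$, $Du(X_i)=(u(X_{i+1})-u(X_i))/\epsilon$, $|u|_{H^1}=(\frac1N\sum_{i=1}^N|Du(X_i)|^2)^{1/2}$. Two-scale functions $g:\epsilon\mathbb Z\times\mathbb Z\to\mathbb R$ satisfy $g(X_{i+N},Y_j)=g(X_i,Y_j)=g(X_i,Y_{j+p})$; $D_Xg(X_i,Y_j)=(g(X_{i+1},Y_j)-g(X_i,Y_j))/\epsilon$,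 $D_Yg(X_i,Y_j)=g(X_i,Y_{j+1})-g(X_i,Y_j)$, $T_Yg(X_i,Y_j)=g(X_i,Y_{j+1})$, $\langle g\rangle_Y(X_i)=\frac1p\sum_{j=1}^pg(X_i,Y_j)$, $\|g\|_{L^1(N,p)}=\frac1{Np}\sum_{i=1}^N\sum_{j=1}^p|g(X_i,Y_j)|$, and $\|g\|_{L^2(N)}=(\frac1N\sum_{i=1}^N|g(X_i,Y_i)|^2)^{1/2}$ (norm of the restriction to the diagonal $Y=X/\epsilon$). $\psi$ is a two-scale function; $\psi^\epsilon(X_i)=\psi(X_i,X_i/\epsilon)$; $\psi^0(X_i)=\langle1/\psi(X_i,\cdot)\rangle_Y^{-1}$. Cell problem: $\chi$ two-scale with $\langle\chi(X_i,\cdot)\rangle_Y=0$ and $-D_Y(\psi D_Y\chi)=D_Y\psi$ everywhere. Atomistic problem: $u\in U^N_\#(\epsilon\mathbb Z)$ with $\langle\psi^\epsilon Du,Dv\rangle_X=\langle f,v\rangle_X$ for all $v\in U^N_{\rm per}(\epsilon\mathbb Z)$. Homogenized problem: $u^0\in U^N_\#(\epsilon\mathbb Z)$ with $\langle\psi^0Du^0,Dv\rangle_X=\langle f,v\rangle_X$ for all $v\in U^N_{\rm per}(\epsilon\mathbb Z)$. Corrector: $u^{\rm c}(X_i)=u^0(X_i)+\epsilon\chi(X_i,X_i/\epsilon)Du^0(X_i)$. *)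

(* Defs.v *)
From mathcomp Require Import all_boot all_order all_algebra.
From mathcomp Require Import reals.
Set Implicit Arguments. Unset Strict Implicit. Unset Printing Implicit Defensive.
Import Order.TTheory GRing.Theory Num.Theory.
Local Open Scope ring_scope.

(* Lattice functions u : eps Z -> R are represented by their values on the
   index i (u i stands for u(X_i), X_i = eps*i); two-scale functions
   g : eps Z x Z -> R by g i j = g(X_i, Y_j). *)

Section Defs.
Variable R : realType.

Definition per_fun (N : nat) (u : int -> R) : Prop :=
  forall i : int, u (i + N%:Z) = u i.

Definition avgX (N : nat) (u : int -> R) : R :=
  N%:R^-1 * \sum_(1 <= i < N.+1) u i%:Z.

Definition mean_zero (N : nat) (u : int -> R) : Prop := avgX N u = 0.

Definition Dlat (eps : R) (u : int -> R) : int -> R :=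
  fun i => (u (i + 1) - u i) / eps.

Definition H1semi (eps : R) (N : nat) (u : int -> R) : R :=
  Num.sqrt (avgX N (fun i => (Dlat eps u i) ^+ 2)).

Definition two_scale_per (N p : nat) (g : int -> int -> R) : Prop :=
  forall i j : int, g (i + N%:Z) j = g i j /\ g i (j + p%:Z) = g i j.

Definition DX (eps : R) (g : int -> int -> R) : int -> int -> R :=
  fun i j => (g (i + 1) j - g i j) / eps.
Definition DY (g : int -> int -> R) : int -> int -> R :=
  fun i j => g i (j + 1) - g i j.
Definition TY (g : int -> int -> R) : int -> int -> R :=
  fun i j => g i (j + 1).
Definition avgY (p : nat) (g : int -> int -> R) (i : int) : R :=
  p%:R^-1 * \sum_(1 <= j < p.+1) g i j%:Z.

Definition L1Np (N p : nat) (g : int -> int -> R) : R :=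
  (N%:R * p%:R)^-1 *
  \sum_(1 <= i < N.+1) \sum_(1 <= j < p.+1) `|g i%:Z j%:Z|.

(* norm of the restriction to the diagonal Y = X/eps, i.e. j = i *)
Definition L2N (N : nat) (g : int -> int -> R) : R :=
  Num.sqrt (N%:R^-1 * \sum_(1 <= i < N.+1) (g i%:Z i%:Z) ^+ 2).

Definition psi_eps (psi : int -> int -> R) : int -> R := fun i => psi i i.

Definition psi_hom (p : nat) (psi : int -> int -> R) : int -> R :=
  fun i => (avgY p (fun i j => (psi i j)^-1) i)^-1.

Definition cell_sol (N p : nat) (psi chi : int -> int -> R) : Prop :=
  two_scale_per N p chi /\
  (forall i : int, avgY p chi i = 0) /\
  (forall i j : int,
     - DY (fun i j => psi i j * DY chi i j) i j = DY psi i j).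

Definition weak_sol (eps : R) (N : nat) (a f u : int -> R) : Prop :=
  per_fun N u /\ mean_zero N u /\
  (forall v : int -> R, per_fun N v ->
     avgX N (fun i => a i * Dlat eps u i * Dlat eps v i) = avgX N (fun i => f i * v i)).

Definition atom_sol (eps : R) (N : nat) (psi : int -> int -> R) (f u : int -> R) :=
  weak_sol eps N (psi_eps psi) f u.

Definition hom_sol (eps : R) (N p : nat) (psi : int -> int -> R) (f u0 : int -> R) :=
  weak_sol eps N (psi_hom p psi) f u0.

Definition corrector (eps : R) (chi : int -> int -> R) (u0 : int -> R) : int -> R :=
  fun i => u0 i + eps * chi i i * Dlat eps u0 i.

End Defs.

(* Main.v *)
Require Import Defs.
From mathcomp Require Import all_boot all_order all_algebra.
From mathcomp Require Import reals.
From mathcomp Require Import ring lra.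
Import Order.TTheory GRing.Theory Num.Theory.
Local Open Scope ring_scope.

Section Aux.
Variable R : realType.

Lemma win1 (g : int -> R) n : (forall x, g (x + n%:Z) = g x) ->
  forall a, \sum_(0 <= t < n) g (a + 1 + t%:Z) = \sum_(0 <= t < n) g (a + t%:Z).
Proof.
move=> gP a; case: n gP => [|m] gP; first by rewrite !big_geq.
rewrite big_nat_recr //= big_nat_recl //=.
rewrite addr0 -[in RHS](gP a) -addrA -PoszD addnC addrC; congr (_ + _).
  by rewrite addn1.
by apply: eq_bigr => t _; rewrite -addrA -PoszD add1n.
Qed.

Lemma winS (g : int -> R) n : (forall x, g (x + n%:Z) = g x) ->
  forall a (k : nat), \sum_(0 <= t < n) g (a + k%:Z + t%:Z) = \sum_(0 <= t < n) g (a + t%:Z).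
Proof.
move=> gP a; elim=> [|k IH]; first by under eq_bigr do rewrite addr0.
rewrite -IH -(@win1 g n gP (a + k%:Z)); apply: eq_bigr => t _; congr g.
by rewrite -addn1 PoszD addrA.
Qed.

Lemma win (g : int -> R) n : (forall x, g (x + n%:Z) = g x) ->
  forall a, \sum_(0 <= t < n) g (a + t%:Z) = \sum_(1 <= i < n.+1) g i%:Z.
Proof.
move=> gP a.
have ->: \sum_(1 <= i < n.+1) g i%:Z = \sum_(0 <= t < n) g (0 + 1%:Z + t%:Z).
  rewrite big_add1 /=; apply: eq_bigr => t _; congr g; by rewrite add0r -PoszD.
rewrite winS //.
case: a => k.
  by rewrite -(@winS g n gP 0 k) add0r.
rewrite NegzE -(@winS g n gP _ k.+1); apply: eq_bigr => t _; congr g.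
by rewrite addNr.
Qed.


Lemma CS (I : eqType) (r : seq I) (a b : I -> R) :
  \sum_(i <- r) `|a i| * `|b i| <=
  Num.sqrt (\sum_(i <- r) a i ^+ 2) * Num.sqrt (\sum_(i <- r) b i ^+ 2).
Proof.
set S := \sum_(i <- r) a i ^+ 2; set T := \sum_(i <- r) b i ^+ 2.
set P := \sum_(i <- r) `|a i| * `|b i|.
have S0 : 0 <= S by apply: sumr_ge0 => i _; exact: sqr_ge0.
have T0 : 0 <= T by apply: sumr_ge0 => i _; exact: sqr_ge0.
have P0 : 0 <= P by apply: sumr_ge0 => i _; rewrite mulr_ge0.
have key : P ^+ 2 <= S * T.
  have E : \sum_(i <- r) (S * `|b i| - P * `|a i|) ^+ 2 = S * (S * T - P ^+ 2).
    have -> : \sum_(i <- r) (S * `|b i| - P * `|a i|) ^+ 2 =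
       \sum_(i <- r) (S ^+ 2 * b i ^+ 2 + P ^+ 2 * a i ^+ 2 - 2 * S * P * (`|a i| * `|b i|)).
      apply: eq_bigr => i _; idtac.
      rewrite -(real_normK (num_real (b i))) -(real_normK (num_real (a i))); ring.
    rewrite sumrB big_split /= -!mulr_sumr -/S -/T -/P; ring.
  have : 0 <= S * (S * T - P ^+ 2) by rewrite -E; apply: sumr_ge0 => i _; exact: sqr_ge0.
  have [Sz|Sp] := eqVneq S 0.
    have Pz : P = 0.
      have : all (fun i => true ==> (a i ^+ 2 == 0)) r.
        rewrite -psumr_eq0; [by rewrite -/S Sz | by move=> i _; exact: sqr_ge0].
      move/allP => H; rewrite /P big_seq big1 // => i ir.
      by have := H i ir; rewrite /= sqrf_eq0 => /eqP ->; rewrite normr0 mul0r.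
    by move=> _; rewrite Pz Sz expr0n /= !mul0r.
  have Sq : 0 < S by rewrite lt_def Sp S0.
  by rewrite pmulr_rge0 // subr_ge0.
rewrite -sqrtrM // -[P in P <= _](ger0_norm P0) -sqrtr_sqr ler_sqrt //.
by rewrite mulr_ge0.
Qed.


Lemma tele (h : int -> R) a m n : (m <= n)%N ->
  h (a + n%:Z) - h (a + m%:Z) = \sum_(m <= t < n) (h (a + t%:Z + 1) - h (a + t%:Z)).
Proof.
elim: n => [|n IH].
  by rewrite leqn0 => /eqP ->; rewrite big_geq // subrr.
rewrite leq_eqVlt => /orP [/eqP ->|]; first by rewrite big_geq // subrr.
rewrite ltnS => mn; rewrite big_nat_recr //= -IH //.
have -> : a + n%:Z + 1 = a + n.+1%:Z by rewrite -addn1 PoszD addrA.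
ring.
Qed.

Lemma perk (g : int -> R) (p : nat) : (forall x, g (x + p%:Z) = g x) ->
  forall k x, g (x + (k * p)%N%:Z) = g x.
Proof.
move=> gP; elim=> [|k IH] x; first by rewrite mul0n addr0.
by rewrite mulSn PoszD addrA IH gP.
Qed.


Lemma shiftS (g : int -> R) n : (forall x, g (x + n%:Z) = g x) ->
  forall c, \sum_(1 <= i < n.+1) g (i%:Z + c) = \sum_(1 <= i < n.+1) g i%:Z.
Proof.
move=> gP c.
have gP' : forall x, (fun y => g (y + c)) (x + n%:Z) = (fun y => g (y + c)) x.
  by move=> x /=; rewrite -addrA (addrC n%:Z) addrA gP.
rewrite -(@win g n gP c) -(@win _ n gP' 0); apply: eq_bigr => t _ /=; congr g; ring.
Qed.

Lemma tri (h : int -> R) a (s p : nat) : (s <= p)%N ->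
  `|2 * h (a + s%:Z) - h a - h (a + p%:Z)| <=
  \sum_(0 <= t < p) `|h (a + t%:Z + 1) - h (a + t%:Z)|.
Proof.
move=> sp.
have X := @tele h a 0 s (leq0n s); have Y := @tele h a s p sp.
rewrite addr0 in X.
have -> : 2 * h (a + s%:Z) - h a - h (a + p%:Z) =
   (h (a + s%:Z) - h a) - (h (a + p%:Z) - h (a + s%:Z)) by ring.
rewrite X Y (@big_cat_nat _ _ _ s 0 p _ _ (leq0n s) sp) /=.
apply: le_trans (ler_normB _ _) _.
by apply: lerD; apply: ler_norm_sum.
Qed.


Lemma constK (K : int -> R) : (forall j, K (j + 1) = K j) -> forall j, K j = K 0.
Proof.
move=> KP.
have H : forall a (k : nat), K (a + k%:Z) = K a.
  move=> a; elim=> [|k IH]; first by rewrite addr0.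
  by rewrite -addn1 PoszD addrA KP.
case=> k; first by rewrite -[Posz k]add0r H.
by rewrite -(H _ k.+1) NegzE addNr.
Qed.

Lemma perD (eps : R) N (u : int -> R) : per_fun N u -> per_fun N (Dlat eps u).
Proof.
move=> uP i; rewrite /Dlat -addrA (addrC N%:Z) addrA !uP //.
Qed.

Lemma avgX_lin N (F G H : int -> R) c :
  avgX N (fun i => F i + c * G i - H i) = avgX N F + c * avgX N G - avgX N H.
Proof. by rewrite /avgX sumrB big_split /= -mulr_sumr; ring. Qed.

End Aux.

Theorem lemma4p4 (R : realType) (eps : R) (N p : nat)
  (psi chi : int -> int -> R) (f u u0 : int -> R) (c_psi C_psi : R) :
  0 < eps -> (0 < N)%N -> (0 < p)%N -> (p %| N)%N ->
  per_fun N f -> avgX N f = 0 ->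
  two_scale_per N p psi ->
  0 < c_psi -> (forall i j : int, c_psi <= psi i j <= C_psi) ->
  atom_sol eps N psi f u ->
  hom_sol eps N p psi f u0 ->
  cell_sol N p psi chi ->
  let w := fun i j => chi i j * Dlat eps u0 i in
  let uc := corrector eps chi u0 in
  per_fun N uc /\
  `|avgX N uc| <= eps ^+ 2 * (p%:R / 2) * L1Np N p (DX eps w) /\
  H1semi eps N (fun i => uc i - u i) <= eps * (C_psi / c_psi) * L2N N (DX eps (TY w)).
Proof.
move=> eps0 N0 p0 pN fP fav psiP c0 psiB [uP [um uW]] [u0P [u0m u0W]]
  [chiP [chiav chic]] w uc.
have epsn0 : eps != 0 by rewrite gt_eqF.
have NE : N = (N %/ p * p)%N by rewrite divnK.
have chiX : forall i j, chi (i + N%:Z) j = chi i j by move=> i j; case: (chiP i j).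
have chiY : forall i j, chi i (j + p%:Z) = chi i j by move=> i j; case: (chiP i j).
have chiN : forall i j, chi i (j + N%:Z) = chi i j.
  by move=> i j; rewrite NE (@perk R (chi i) p (chiY i)).
have Du0P := @perD R eps N u0 u0P.
have wX : forall i j, w (i + N%:Z) j = w i j by move=> i j; rewrite /w chiX Du0P.
have wY : forall i j, w i (j + p%:Z) = w i j by move=> i j; rewrite /w chiY.
have wN : forall i j, w i (j + N%:Z) = w i j by move=> i j; rewrite /w chiN.
have ucP : per_fun N uc.
  by move=> i; rewrite /uc /corrector u0P chiX chiN Du0P.
split => //.
split.
  pose D := fun x y => w (x + 1) y - w x y.
  have DXp : forall x y, D (x + N%:Z) y = D x y.
    by move=> x y; rewrite /D (addrAC x N%:Z 1) !wX.
  have DNp : forall x y, D x (y + N%:Z) = D x y by move=> x y; rewrite /D !wN.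
  have DYp : forall x y, D x (y + p%:Z) = D x y by move=> x y; rewrite /D !wY.
  have wsum0 : forall i, \sum_(1 <= j < p.+1) w i j%:Z = 0.
    move=> i; rewrite /w -mulr_suml; have := chiav i; rewrite /avgY => /eqP.
    rewrite mulf_eq0 invr_eq0 pnatr_eq0 (negbTE (lt0n_neq0 p0)) /= => /eqP ->; by rewrite mul0r.
  have wwin0 : forall i a, \sum_(0 <= s < p) w i (a + s%:Z) = 0.
    by move=> i a; rewrite (@win R (w i) p (wY i) a) wsum0.
  have As : forall s : nat, \sum_(1 <= i < N.+1) w (i%:Z - s%:Z) i%:Z =
                 \sum_(1 <= i < N.+1) w i%:Z (i%:Z + s%:Z).
    move=> s; rewrite -(@shiftS R (fun i => w (i - s%:Z) i) N _ s%:Z).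
      by apply: eq_bigr => i _ /=; rewrite addrK.
    by move=> x /=; rewrite (addrAC x N%:Z) wX wN.
  have Bs : forall s : nat, \sum_(1 <= i < N.+1) w (i%:Z + p%:Z - s%:Z) i%:Z =
                 \sum_(1 <= i < N.+1) w i%:Z (i%:Z + s%:Z).
    move=> s; rewrite -(@shiftS R (fun i => w (i + p%:Z - s%:Z) i) N _ (s%:Z - p%:Z)).
      apply: eq_bigr => i _ /=.
      have -> : i%:Z + (s%:Z - p%:Z) + p%:Z - s%:Z = i%:Z by ring.
      have -> : i%:Z + s%:Z = i%:Z + (s%:Z - p%:Z) + p%:Z by ring.
      by rewrite wY.
    move=> x /=.
    have -> : x + N%:Z + p%:Z - s%:Z = x + p%:Z - s%:Z + N%:Z by ring.
    by rewrite wX wN.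
  have sum0 : \sum_(0 <= s < p) \sum_(1 <= i < N.+1) w i%:Z (i%:Z + s%:Z) = 0.
    by rewrite exchange_big /=; apply: big1 => i _; apply: wwin0.
  set S := \sum_(1 <= i < N.+1) w i%:Z i%:Z.
  have key : 2 * p%:R * S = \sum_(0 <= s < p) \sum_(1 <= i < N.+1)
      (2 * w i%:Z i%:Z - w (i%:Z - s%:Z) i%:Z - w (i%:Z + p%:Z - s%:Z) i%:Z).
    under eq_bigr => s _ do rewrite !sumrB -mulr_sumr As Bs.
    rewrite !sumrB sum0 sumr_const_nat subn0 !subr0 -/S.
    by rewrite -mulr_natl; ring.
  set T := \sum_(1 <= i < N.+1) \sum_(1 <= j < p.+1) `|D i%:Z j%:Z|.
  have bnd1 : `|2 * p%:R * S| <= \sum_(0 <= s < p) \sum_(1 <= i < N.+1)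
       \sum_(0 <= t < p) `|D (i%:Z - s%:Z + t%:Z) i%:Z|.
    rewrite key; apply: le_trans (ler_norm_sum _ _ _) _.
    rewrite big_seq_cond [X in _ <= X]big_seq_cond; apply: ler_sum => s.
    rewrite andbT mem_index_iota => /andP [_ sp].
    apply: le_trans (ler_norm_sum _ _ _) _; apply: ler_sum => i _.
    rewrite (_ : i%:Z + p%:Z - s%:Z = i%:Z - s%:Z + p%:Z); last by ring.
    by have := @tri R (fun x => w x i%:Z) (i%:Z - s%:Z) s p (ltnW sp); rewrite subrK.
  have bnd2 : \sum_(0 <= s < p) \sum_(1 <= i < N.+1)
       \sum_(0 <= t < p) `|D (i%:Z - s%:Z + t%:Z) i%:Z| = p%:R * T.
    under eq_bigr => s _ do rewrite exchange_big /=.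
    have sh : forall s t : nat, \sum_(1 <= i < N.+1) `|D (i%:Z - s%:Z + t%:Z) i%:Z| =
              \sum_(1 <= i < N.+1) `|D i%:Z (i%:Z - t%:Z + s%:Z)|.
      move=> s t.
      rewrite -(@shiftS R (fun i => `|D (i - s%:Z + t%:Z) i|) N _ (s%:Z - t%:Z)).
        apply: eq_bigr => i _ /=; congr (`|D _ _|); ring.
      move=> x /=.
      have -> : x + N%:Z - s%:Z + t%:Z = x - s%:Z + t%:Z + N%:Z by ring.
      by rewrite DXp DNp.
    under eq_bigr => s _ do under eq_bigr => t _ do rewrite sh.
    rewrite exchange_big /=.
    under eq_bigr => t _ do rewrite exchange_big /=.
    under eq_bigr => t _ do under eq_bigr => i _ do
      rewrite (@win R (fun y => `|D i%:Z y|) p (fun y => congr1 Num.norm (DYp i%:Z y)) (i%:Z - t%:Z)).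
    by rewrite sumr_const_nat subn0 -/T mulr_natl.
  have pR : 0 < p%:R :> R by rewrite ltr0n.
  have NR : 0 < N%:R :> R by rewrite ltr0n.
  have ST : `|S| <= T / 2.
    have : 2 * p%:R * `|S| <= p%:R * T.
      by rewrite -bnd2 (_ : 2 * p%:R * `|S| = `|2 * p%:R * S|) // normrM normrM
        ger0_norm // ger0_norm // ltW.
    move=> H; nra.
  have avg : avgX N uc = eps * N%:R^-1 * S.
    rewrite /avgX /uc /corrector big_split /=.
    have -> : \sum_(1 <= i < N.+1) u0 i%:Z = 0.
      move: u0m; rewrite /mean_zero /avgX => /eqP.
      by rewrite mulf_eq0 invr_eq0 pnatr_eq0 (negbTE (lt0n_neq0 N0)) /= => /eqP.
    rewrite add0r /S /w.
    under eq_bigr => i _ do rewrite -mulrA.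
    by rewrite -mulr_sumr; ring.
  have L1 : L1Np N p (DX eps w) = (N%:R * p%:R)^-1 * (T / eps).
    rewrite /L1Np /T mulr_suml; congr (_ * _); apply: eq_bigr => i _.
    rewrite mulr_suml; apply: eq_bigr => j _.
    by rewrite /DX normrM normfV (gtr0_norm eps0).
  rewrite avg L1.
  have -> : eps ^+ 2 * (p%:R / 2) * ((N%:R * p%:R)^-1 * (T / eps)) =
            eps * N%:R^-1 * (T / 2).
    by field; rewrite !gt_eqF.
  rewrite normrM ger0_norm; last by rewrite mulr_ge0 // ?invr_ge0 ltW.
  by rewrite ler_wpM2l // mulr_ge0 // ?invr_ge0 ltW.


pose z := fun i => DX eps (TY w) i i.
have psipos : forall i j, 0 < psi i j.
  by move=> i j; have /andP [h _] := psiB i j; exact: lt_le_trans h.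
have Cpos : 0 < C_psi.
  by have /andP [h1 h2] := psiB 0 0; apply: lt_le_trans c0 (le_trans h1 h2).
have K1 : forall i j, (fun j => psi i j * (1 + DY chi i j)) (j + 1) =
                      (fun j => psi i j * (1 + DY chi i j)) j.
  move=> i j /=; have := chic i j; rewrite /DY => H; nra.
have Kc := fun i => @constK R _ (K1 i).
have sumDY : forall i, \sum_(1 <= j < p.+1) DY chi i j%:Z = 0.
  move=> i; have := @tele R (chi i) 0 1 p.+1 (ltn0Sn p).
  rewrite !add0r intS addrC chiY addNr => /esym H.
  rewrite -[RHS]H; apply: eq_bigr => j _; by rewrite /DY add0r.
have Khom : forall i j, psi i j * (1 + DY chi i j) = psi_hom p psi i.
  move=> i j; have := Kc i j; rewrite /= => ->.
  set K0 := psi i 0 * (1 + DY chi i 0).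
  have E : K0 * \sum_(1 <= j < p.+1) (psi i j%:Z)^-1 = p%:R.
    rewrite mulr_sumr.
    have -> : \sum_(1 <= j < p.+1) K0 * (psi i j%:Z)^-1 =
              \sum_(1 <= j < p.+1) (1 + DY chi i j%:Z).
      apply: eq_bigr => k _; rewrite /K0 -(Kc i k%:Z) /=.
      by field; rewrite gt_eqF.
    by rewrite big_split /= sumDY addr0 sumr_const_nat subSS subn0.
  have pn0 : p%:R != 0 :> R by rewrite pnatr_eq0 -lt0n.
  have Qn0 : \sum_(1 <= j < p.+1) (psi i j%:Z)^-1 != 0.
    by apply: contra pn0 => /eqP Q0; rewrite -E Q0 mulr0.
  have K0n0 : K0 != 0.
    by apply: contra pn0 => /eqP K00; rewrite -E K00 mul0r.
  rewrite /psi_hom /avgY -E; field.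
  by rewrite K0n0 Qn0.
have Duc : forall i, Dlat eps uc i = Dlat eps u0 i * (1 + DY chi i i) + eps * z i.
  move=> i; rewrite /Dlat /uc /corrector /z /DX /TY /w /DY /Dlat; field.
  by rewrite gt_eqF.
set e := fun i => uc i - u i.
have eP : per_fun N e by move=> i; rewrite /e ucP uP.
have De : forall i, Dlat eps e i = Dlat eps uc i - Dlat eps u i.
  by move=> i; rewrite /Dlat /e; field; rewrite gt_eqF.
have pw : forall i, psi_eps psi i * Dlat eps e i * Dlat eps e i =
   psi_hom p psi i * Dlat eps u0 i * Dlat eps e i +
   eps * (psi_eps psi i * z i * Dlat eps e i) -
   psi_eps psi i * Dlat eps u i * Dlat eps e i.
  move=> i; rewrite -(Khom i i) /psi_eps.
  set d := Dlat eps e i.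
  rewrite {1}/d De Duc; ring.
have energy : avgX N (fun i => psi_eps psi i * Dlat eps e i * Dlat eps e i) =
   eps * avgX N (fun i => psi_eps psi i * z i * Dlat eps e i).
  have -> : avgX N (fun i => psi_eps psi i * Dlat eps e i * Dlat eps e i) =
     avgX N (fun i => psi_hom p psi i * Dlat eps u0 i * Dlat eps e i +
       eps * (psi_eps psi i * z i * Dlat eps e i) -
       psi_eps psi i * Dlat eps u i * Dlat eps e i).
    by rewrite /avgX; congr (_ * _); apply: eq_bigr => i _; rewrite pw.
  by rewrite avgX_lin (u0W e eP) (uW e eP); ring.
have NR : 0 < N%:R :> R by rewrite ltr0n.
have Ni0 : 0 <= N%:R^-1 :> R by rewrite invr_ge0 ltW.
set A := avgX N (fun i => Dlat eps e i ^+ 2).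
set Z := avgX N (fun i => z i ^+ 2).
have low : c_psi * A <= avgX N (fun i => psi_eps psi i * Dlat eps e i * Dlat eps e i).
  rewrite /A /avgX mulrCA; apply: ler_wpM2l => //; rewrite mulr_sumr.
  apply: ler_sum => i _; rewrite -mulrA -expr2; apply: ler_wpM2r; first exact: sqr_ge0.
  by have /andP [] := psiB i%:Z i%:Z.
have up : avgX N (fun i => psi_eps psi i * z i * Dlat eps e i) <=
          C_psi * (Num.sqrt Z * Num.sqrt A).
  apply: (@le_trans _ _ (C_psi * (N%:R^-1 *
      \sum_(1 <= i < N.+1) `|z i%:Z| * `|Dlat eps e i%:Z|))).
    rewrite /avgX mulrCA; apply: ler_wpM2l => //; rewrite mulr_sumr.
    apply: ler_sum => i _; apply: le_trans (ler_norm _) _.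
    rewrite !normrM (gtr0_norm (psipos _ _)) -mulrA; apply: ler_wpM2r.
      by rewrite !mulr_ge0.
    by have /andP [] := psiB i%:Z i%:Z.
  apply: ler_wpM2l; first exact: ltW.
  rewrite /Z /A /avgX !sqrtrM // mulrACA -expr2 sqr_sqrtr //.
  apply: ler_wpM2l => //.
  exact: CS.
have -> : H1semi eps N e = Num.sqrt A by [].
have -> : L2N N (DX eps (TY w)) = Num.sqrt Z by [].
have A0 : 0 <= A by rewrite /A /avgX mulr_ge0 // sumr_ge0 // => i _; exact: sqr_ge0.
have h : c_psi * Num.sqrt A ^+ 2 <= eps * C_psi * Num.sqrt Z * Num.sqrt A.
  rewrite sqr_sqrtr //; apply: le_trans low _; rewrite energy -!mulrA.
  by apply: ler_wpM2l; [exact: ltW | exact: up].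
have sA := sqrtr_ge0 A; have sZ := sqrtr_ge0 Z.
have [sA0|sAp] := eqVneq (Num.sqrt A) 0.
  by rewrite sA0 mulr_ge0 // mulr_ge0 // ?ltW // divr_gt0.
have sApos : 0 < Num.sqrt A by rewrite lt_def sAp sA.
rewrite (_ : eps * (C_psi / c_psi) * Num.sqrt Z = (eps * C_psi * Num.sqrt Z) / c_psi);
  last by rewrite !mulrA mulrAC.
rewrite ler_pdivlMr //.
rewrite -(ler_pM2r sApos); apply: le_trans h; rewrite expr2; rewrite le_eqVlt; apply/orP; left; apply/eqP; ring.
Qed.
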